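(* Let $A\in\mathbb{R}^{n\times n}$ be symmetric, $Z\in\mathbb{R}^{n\times k}$, $\alpha\in\{+1,-1\}$, $\beta\in\{+1,-1\}$, and suppose that both $A$ and $A+\alpha ZZ^{T}$ are positive definite. Let $V\in\mathbb{R}^{n\times k}$ be defined by $V=Z$ if $\beta=1$ and $V=A^{-1}Z(I_k+\alpha Z^{T}A^{-1}Z)^{-1/2}$ if $\beta=-1$. Consider the matrix equation in $C\in\mathbb{R}^{n\times n}$ \[ A^{\beta/2}C+CA^{\beta/2}+\alpha\beta C^{2}=VV^{T}. \quad (\ast) \] Then $C=\alpha\beta\left((A+\alpha ZZ^{T})^{\beta/2}-A^{\beta/2}\right)$ is a solution of $(\ast)$. Conversely, if $C$ is a positive definite solution of $(\ast)$ for which $A^{\beta/2}+\alpha\beta C$ is positive definite as well, then $A^{\beta/2}+\alpha\beta C=(A+\alpha ZZ^{T})^{\beta/2}$.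
   Context: For a symmetric positive definite matrix $M$, $M^{1/2}$ is its principal square root and $M^{-1/2}=(M^{1/2})^{-1}$; $M^{\beta/2}$ is interpreted accordingly for $\beta=\pm1$. With this choice of $V$ one has $(A+\alpha ZZ^{T})^{\beta}=A^{\beta}+\alpha\beta VV^{T}$. *)

(* Defs.v *)
From HB Require Import structures.
From mathcomp Require Import all_boot all_order all_algebra.
Set Implicit Arguments. Unset Strict Implicit. Unset Printing Implicit Defensive.
Import Order.TTheory GRing.Theory Num.Theory.
Local Open Scope ring_scope.

Definition posdef (R : realFieldType) (n : nat) (M : 'M[R]_n) : Prop :=
  M^T = M /\ forall x : 'cV[R]_n, x != 0 -> 0 < (x^T *m M *m x) 0 0.

Definition is_psqrt (R : realFieldType) (n : nat) (M S : 'M[R]_n) : Prop :=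
  posdef S /\ S *m S = M.

(* M^{beta/2} given the principal square root S = M^{1/2}, for beta = +-1:
   M^{1/2} = S and M^{-1/2} = S^{-1}. *)
Definition halfpow (R : realFieldType) (n : nat) (beta : R) (S : 'M[R]_n) : 'M[R]_n :=
  if beta == 1 then S else invmx S.

(* Main.v *)
Require Import Defs.
From mathcomp Require Import all_boot all_order all_algebra.
From mathcomp Require Import lra.
Import Order.TTheory GRing.Theory Num.Theory.
Local Open Scope ring_scope.

Section H.
Set Implicit Arguments. Unset Strict Implicit.
Variable R : rcfType.

Lemma posdef_unit {n} {M : 'M[R]_n} : posdef M -> M \in unitmx.
Proof.
move=> [MT Mp]; rewrite unitmxE unitfE; apply/negP => /det0P [v v0 vM].
have := Mp v^T; rewrite trmx_eq0 => /(_ v0).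
by rewrite trmxK vM mul0mx mxE ltxx.
Qed.

Lemma myinv_eq n (M W : 'M[R]_n) : M \in unitmx -> M *m W = 1%:M -> invmx M = W.
Proof. by move=> uM MW; rewrite -[W](mulKmx uM) MW mulmx1. Qed.

Lemma invmxM n (A B : 'M[R]_n) : A \in unitmx -> B \in unitmx ->
  invmx (A *m B) = invmx B *m invmx A.
Proof.
move=> uA uB; apply: myinv_eq; first by rewrite unitmx_mul uA uB.
by rewrite -mulmxA (mulmxA B) mulmxV // mul1mx mulmxV.
Qed.

Lemma posdef_inv n (M : 'M[R]_n) : posdef M -> posdef (invmx M).
Proof.
move=> PM; have uM := posdef_unit PM; case: PM => MT Mp; split.
  by rewrite trmx_inv MT.
move=> x x0; set y := invmx M *m x.
have xy : x = M *m y by rewrite /y mulKVmx.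
have y0 : y != 0 by apply: contraNneq x0 => y0; rewrite xy y0 mulmx0.
clearbody y; have := Mp y y0; congr (_ < _); rewrite xy trmx_mul MT -!mulmxA mulKVmx //.
Qed.

Lemma psd_uniq n (P Q : 'M[R]_n) : posdef P -> posdef Q -> P *m P = Q *m Q -> P = Q.
Proof.
move=> [PT Pp] [QT Qp] PQ.
set D := P - Q.
have DT : D^T = D by rewrite /D linearB /= PT QT.
have H0 : P *m D + D *m Q = 0.
  by rewrite /D mulmxBr mulmxBl PQ addrA subrK subrr.
have H1 : \tr (D *m P *m D) + \tr (D *m Q *m D) = 0.
  have -> : \tr (D *m Q *m D) = \tr (D *m (D *m Q)) by rewrite mxtrace_mulC.
  rewrite -mulmxA -raddfD /= -mulmxDr H0 mulmx0 linear0 //.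
have diagE (S : 'M[R]_n) i : (D *m S *m D) i i = ((col i D)^T *m S *m col i D) 0 0.
  rewrite tr_col DT -row_mul !mxE; apply: eq_bigr => j _; rewrite !mxE.
  done.
have ge0 (S : 'M[R]_n) : (forall x : 'cV[R]_n, x != 0 -> 0 < (x^T *m S *m x) 0 0) ->
    forall i, 0 <= (D *m S *m D) i i.
  move=> Sp i; rewrite diagE; have [->|ne] := eqVneq (col i D) 0.
    by rewrite mulmx0 mxE.
  exact: ltW (Sp _ ne).
have trge0 (S : 'M[R]_n) : (forall x : 'cV[R]_n, x != 0 -> 0 < (x^T *m S *m x) 0 0) ->
    0 <= \tr (D *m S *m D).
  by move=> Sp; apply: sumr_ge0 => i _; apply: ge0.
move/eqP: H1; rewrite paddr_eq0 ?trge0 // => /andP [/eqP HP _].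
have colD i : col i D = 0.
  apply/eqP; apply/negP => /negP ne; have := Pp _ ne.
  rewrite -diagE (psumr_eq0P (fun i _ => ge0 _ Pp i) HP) // ltxx //.
apply/eqP; rewrite -subr_eq0; apply/eqP/matrixP => i j.
by have := congr1 (fun M : 'cV[R]_n => M i 0) (colD j); rewrite !mxE.
Qed.

End H.
Lemma zm (V : zmodType) (a b c d : V) : (a - b) + (c - b) + ((d - a) - (c - b)) = d - b.
Proof. by rewrite -addrA [(c - b) + _]addrC subrK addrC addrA subrK. Qed.


Lemma key (R : rcfType) n (X Y : 'M[R]_n) g : g * g = 1 ->
  X *m (g *: (Y - X)) + (g *: (Y - X)) *m X + g *: ((g *: (Y - X)) *m (g *: (Y - X)))
  = g *: (Y *m Y - X *m X).
Proof.
move=> gg.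
rewrite -scalemxAl -!scalemxAr -scalemxAl scalerA gg scale1r.
rewrite -!scalerDr; congr (_ *: _).
by rewrite !mulmxBr !mulmxBl zm.
Qed.

Lemma sq (R : rcfType) n (X C W : 'M[R]_n) g : g * g = 1 ->
  X *m C + C *m X + g *: (C *m C) = W ->
  (X + g *: C) *m (X + g *: C) = X *m X + g *: W.
Proof.
move=> gg <-.
rewrite mulmxDl !mulmxDr -!scalemxAl -!scalemxAr scalerA gg scale1r.
by rewrite !scalerDr scalerA gg scale1r !addrA [X *m X + _ + _]addrAC.
Qed.

Lemma wood (R : rcfType) n k (A : 'M[R]_n) (Z : 'M[R]_(n, k)) a :
  A \in unitmx -> (A + a *: (Z *m Z^T)) \in unitmx ->
  (1%:M + a *: (Z^T *m invmx A *m Z)) \in unitmx ->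
  invmx (A + a *: (Z *m Z^T)) =
  invmx A - a *: (invmx A *m Z *m invmx (1%:M + a *: (Z^T *m invmx A *m Z)) *m Z^T *m invmx A).
Proof.
set K := 1%:M + _ => uA uB uK.
apply: myinv_eq => //.
have E1 : (A + a *: (Z *m Z^T)) *m invmx A *m Z = Z *m K.
  rewrite mulmxDl mulmxV // -scalemxAl mulmxDl mul1mx /K mulmxDr mulmx1.
  by rewrite -!scalemxAl -!scalemxAr !mulmxA.
rewrite mulmxBr -scalemxAr !mulmxA E1 mulmxK //.
rewrite mulmxDl mulmxV // -scalemxAl.
by rewrite addrK.
Qed.
Theorem proposition8 (R : rcfType) (n k : nat)
    (A : 'M[R]_n) (Z : 'M[R]_(n, k)) (alpha beta : R)
    (SA SB : 'M[R]_n) (SK : 'M[R]_k) :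
  (alpha = 1 \/ alpha = -1) ->
  (beta = 1 \/ beta = -1) ->
  A^T = A ->
  posdef A ->
  posdef (A + alpha *: (Z *m Z^T)) ->
  is_psqrt A SA ->
  is_psqrt (A + alpha *: (Z *m Z^T)) SB ->
  is_psqrt (1%:M + alpha *: (Z^T *m invmx A *m Z)) SK ->
  let V := if beta == 1 then Z else invmx A *m Z *m invmx SK in
  let Ab := halfpow beta SA in
  let Bb := halfpow beta SB in
  (let C := (alpha * beta) *: (Bb - Ab) in
     Ab *m C + C *m Ab + (alpha * beta) *: (C *m C) = V *m V^T) /\
  (forall C : 'M[R]_n,
     posdef C ->
     posdef (Ab + (alpha * beta) *: C) ->
     Ab *m C + C *m Ab + (alpha * beta) *: (C *m C) = V *m V^T ->
     Ab + (alpha * beta) *: C = Bb).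
Proof.
move=> ha hb AT PA PB [PSA SA2] [PSB SB2] [PSK SK2] V Ab Bb.
have aa : alpha * alpha = 1 by case: ha => ->; lra.
have gg : (alpha * beta) * (alpha * beta) = 1 by case: ha hb => -> [] ->; lra.
have PY : posdef Bb by rewrite /Bb /halfpow; case: ifP => _; [done | exact: posdef_inv].
have HV : (alpha * beta) *: (Bb *m Bb - Ab *m Ab) = V *m V^T.
  case: hb => hb.
    rewrite /V /Ab /Bb /halfpow hb eqxx mulr1 SA2 SB2 addrAC subrr add0r.
    by rewrite scalerA aa scale1r.
  have hf : (-1 == 1 :> R) = false by rewrite lt_eqF //; lra.
  have uA := posdef_unit PA; have uB := posdef_unit PB.
  have uSA := posdef_unit PSA; have uSB := posdef_unit PSB.
  have uSK := posdef_unit PSK.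
  have uK : (1%:M + alpha *: (Z^T *m invmx A *m Z)) \in unitmx.
    by rewrite -SK2 unitmx_mul uSK.
  rewrite /V /Ab /Bb /halfpow hb hf.
  rewrite -(invmxM uSB uSB) -(invmxM uSA uSA) SA2 SB2 wood //.
  rewrite addrAC subrr add0r scalerN scalerA.
  have -> : alpha * -1 * alpha = -1 by rewrite mulrN1 mulNr aa.
  rewrite scaleN1r opprK -SK2 (invmxM uSK uSK).
  case: PSK => SKT _.
  rewrite !trmx_mul !trmx_inv SKT AT !mulmxA.
  done.
split; first by move=> C; rewrite /C key // HV.
move=> C _ PC HC; apply: psd_uniq => //.
by rewrite (@sq _ _ _ _ _ _ gg HC) -HV scalerA gg scale1r addrC subrK.
Qed.
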